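(* Let $a,b\in\mathbb{Z}$ with $\gcd(a,b)=1$ and $a^2+ab-b^2\not\equiv0\pmod5$. Let $m\ge1$ with $5\nmid m$, and suppose $\{G_n(a,b)\}$ is complete mod $m$. Then $\{G_n(a,b)\}$ is complete mod $5m$.
   Context: For integers $a,b$ with $\gcd(a,b)=1$, the Gibonacci sequence $\{G_n(a,b)\}_{n\ge1}$ is defined by $G_1=a$, $G_2=b$, $G_{n+1}=G_{n-1}+G_n$. A sequence is complete mod $m$ if every residue class modulo $m$ contains some term of the sequence. *)

(* Defs.v *)
From Stdlib Require Import ZArith.
Open Scope Z_scope.

(* Gibonacci sequence, indexed from 1: G 1 = a, G 2 = b, G (n+1) = G (n-1) + G n.
   gib_aux a b k returns the pair (G_(k+1), G_(k+2)). *)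
Fixpoint gib_aux (a b : Z) (k : nat) : Z * Z :=
  match k with
  | O => (a, b)
  | S k' => let (x, y) := gib_aux a b k' in (y, x + y)
  end.

(* G a b n = G_n(a,b) for n >= 1 (G a b 0 is the junk value b - a = G_0). *)
Definition G (a b : Z) (n : nat) : Z :=
  match n with
  | O => b - a
  | S k => fst (gib_aux a b k)
  end.

Definition complete_mod (s : nat -> Z) (m : Z) : Prop :=
  forall r : Z, exists n : nat, (1 <= n)%nat /\ (s n - r) mod m = 0.

(* Main.v *)
From Stdlib Require Import ZArith Lia Znumtheory Classical.
From mathcomp Require Import all_boot all_order all_algebra all_field.
From mathcomp Require Import zify ssrZ.
Require Import Defs.
Set Implicit Arguments. Unset Strict Implicit. Unset Printing Implicit Defensive.
Local Open Scope Z_scope.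

Lemma G_rec a b n : G a b (S (S n)) = G a b n + G a b (S n).
Proof.
case: n => [|n]; first by rewrite /G /=; ring.
rewrite /G /=. by case: (gib_aux a b n) => x y /=.
Qed.

Definition pmul (x y : Z * Z) : Z * Z :=
  (fst x * fst y + snd x * snd y, fst x * snd y + snd x * fst y + snd x * snd y).
Fixpoint ppow (x : Z * Z) (n : nat) : Z * Z :=
  match n with O => (1, 0) | S k => pmul x (ppow x k) end.
Definition alp : Z * Z := (0, 1).
Definition st a b n : Z * Z := (G a b n, G a b (S n)).
Definition psub (x y : Z * Z) : Z * Z := (fst x - fst y, snd x - snd y).
Definition pscal (c : Z) (x : Z * Z) : Z * Z := (c * fst x, c * snd x).

Lemma pmulA x y z : pmul x (pmul y z) = pmul (pmul x y) z.
Proof. case: x => ? ?; case: y => ? ?; case: z => ? ? /=; rewrite /pmul /=; congr pair; ring. Qed.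
Lemma pmulC x y : pmul x y = pmul y x.
Proof. case: x => ? ?; case: y => ? ? /=; rewrite /pmul /=; congr pair; ring. Qed.
Lemma pmul1 x : pmul (1, 0) x = x.
Proof. case: x => ? ?; rewrite /pmul; cbn [fst snd]; congr pair; ring. Qed.
Lemma pmulB z x y : pmul z (psub x y) = psub (pmul z x) (pmul z y).
Proof. case: x => ? ?; case: y => ? ?; case: z => ? ? /=; rewrite /pmul /psub /=; congr pair; ring. Qed.
Lemma pmulS z c x : pmul z (pscal c x) = pscal c (pmul z x).
Proof. case: x => ? ?; case: z => ? ? /=; rewrite /pmul /pscal /=; congr pair; ring. Qed.

Lemma ppowD x k l : ppow x (k + l) = pmul (ppow x k) (ppow x l).
Proof. elim: k => [|k IH] /=; first by rewrite pmul1. by rewrite IH pmulA. Qed.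
Lemma ppowM x y n : ppow (pmul x y) n = pmul (ppow x n) (ppow y n).
Proof.
elim: n => [|n IH] /=; first by rewrite /pmul /=.
rewrite IH. rewrite -!pmulA. f_equal. rewrite !pmulA. f_equal. by rewrite pmulC.
Qed.
Lemma ppow1 n : ppow (1, 0) n = (1, 0).
Proof. elim: n => [|n IH] //=; by rewrite IH. Qed.

Lemma st_S a b n : st a b (S n) = pmul alp (st a b n).
Proof. rewrite /st /pmul /alp; cbn [fst snd]; rewrite G_rec; congr pair; ring. Qed.

Lemma st_shift a b k n : st a b (k + n) = pmul (ppow alp k) (st a b n).
Proof. elim: k => [|k IH] /=; first by rewrite pmul1. by rewrite st_S IH pmulA. Qed.

Definition congP (m : Z) (x y : Z * Z) := (m | fst x - fst y) /\ (m | snd x - snd y).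

Lemma congP_refl m x : congP m x x.
Proof. by split; exists 0; ring. Qed.
Lemma congP_sym m x y : congP m x y -> congP m y x.
Proof. case=> [[k1 H1] [k2 H2]]; split; [exists (-k1) | exists (-k2)]; lia. Qed.
Lemma congP_trans m x y z : congP m x y -> congP m y z -> congP m x z.
Proof. case=> [[k1 H1] [k2 H2]] [[k3 H3] [k4 H4]]; split; [exists (k1+k3) | exists (k2+k4)]; lia. Qed.
Lemma congP_mul m z x y : congP m x y -> congP m (pmul z x) (pmul z y).
Proof.
case: x => x1 x2; case: y => y1 y2; case: z => z1 z2.
rewrite /congP /pmul; cbn [fst snd].
case=> [[k1 H1] [k2 H2]].
split; [exists (z1 * k1 + z2 * k2) | exists (z1 * k2 + z2 * k1 + z2 * k2)].
  have -> : z1 * x1 + z2 * x2 - (z1 * y1 + z2 * y2) = z1 * (x1 - y1) + z2 * (x2 - y2) by ring.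
  rewrite H1 H2; ring.
have -> : z1 * x2 + z2 * x1 + z2 * x2 - (z1 * y2 + z2 * y1 + z2 * y2) = z1 * (x2 - y2) + z2 * (x1 - y1) + z2 * (x2 - y2) by ring.
rewrite H1 H2; ring.
Qed.

Definition per a b m P := congP m (st a b P) (st a b 0).

Lemma per_iter a b m P : per a b m P -> forall k n, congP m (st a b (n + k * P)) (st a b n).
Proof.
move=> HP k n.
have E : forall j, congP m (st a b (j * P)) (st a b 0).
  elim=> [|j IH]; first exact: congP_refl.
  rewrite mulSn st_shift.
  apply: congP_trans (congP_mul _ IH) _.
  by rewrite -st_shift addn0.
have -> : st a b n = pmul (ppow alp n) (st a b 0) by rewrite -st_shift addn0.
rewrite st_shift; apply: congP_mul; exact: E.
Qed.

Lemma modeq_div (m x y : Z) : 0 < m -> x mod m = y mod m -> (m | x - y).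
Proof.
move=> m0 E.
have Hx := Z.div_mod x m ltac:(lia). have Hy := Z.div_mod y m ltac:(lia).
exists (x / m - y / m). nia.
Qed.

Definition code (a b m : Z) (k : nat) : nat :=
  Z.to_nat ((G a b k mod m) * m + G a b (S k) mod m).

Lemma code_lt a b m k : 1 <= m -> (code a b m k < (Z.to_nat m * Z.to_nat m))%N.
Proof.
move=> m1; rewrite /code.
have := Z.mod_pos_bound (G a b k) m ltac:(lia).
have := Z.mod_pos_bound (G a b (S k)) m ltac:(lia).
move=> H1 H2. apply/ltP. nia.
Qed.

Lemma code_inj a b m k l : 1 <= m -> code a b m k = code a b m l -> congP m (st a b k) (st a b l).
Proof.
move=> m1; rewrite /code /congP /st; cbn [fst snd].
have := Z.mod_pos_bound (G a b k) m ltac:(lia).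
have := Z.mod_pos_bound (G a b (S k)) m ltac:(lia).
have := Z.mod_pos_bound (G a b l) m ltac:(lia).
have := Z.mod_pos_bound (G a b (S l)) m ltac:(lia).
move=> H1 H2 H3 H4 E.
have E' : G a b k mod m * m + G a b (S k) mod m = G a b l mod m * m + G a b (S l) mod m by lia.
have E1 : G a b k mod m = G a b l mod m by nia.
have E2 : G a b (S k) mod m = G a b (S l) mod m by nia.
split; apply: modeq_div => //; lia.
Qed.

Lemma pigeon a b m : 1 <= m -> exists i j, (i < j)%N /\ congP m (st a b i) (st a b j).
Proof.
move=> m1.
apply: NNPP => H.
set N := (Z.to_nat m * Z.to_nat m)%N.
pose f (k : 'I_N.+1) : 'I_N := Ordinal (code_lt a b k m1).
have finj : injective f.
  move=> x y /(congr1 val) /= /(code_inj m1) C.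
  apply: val_inj => /=.
  case: (ltngtP x y) => // [xy|yx].
    by exfalso; apply: H; exists x, y; split.
  by exfalso; apply: H; exists y, x; split => //; apply: congP_sym.
by have := leq_card f finj; rewrite !card_ord ltnn.
Qed.

Definition binv : Z * Z := (-1, 1).

Lemma per_exists a b m : 1 <= m -> exists Q, (0 < Q)%N /\ per a b m Q.
Proof.
move=> m1; have [i [j [ij C]]] := pigeon a b m1.
exists (j - i)%N; split; first by rewrite subn_gt0.
set d := (j - i)%N.
have jE : j = (d + i)%N by rewrite /d subnK // ltnW.
set B := ppow binv i.
have Bi : pmul B (st a b i) = st a b 0.
  rewrite -(addn0 i) st_shift pmulA /B -ppowM.
  have -> : pmul binv alp = (1, 0) by [].
  by rewrite ppow1 pmul1.
have C' := congP_mul B (congP_sym C).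
rewrite jE st_shift pmulA (pmulC B) -pmulA Bi in C'.
rewrite /per -(addn0 d) st_shift.
exact: C'.
Qed.

Lemma G0 a b : G a b 0 = b - a. Proof. by []. Qed.
Lemma G1 a b : G a b 1 = a. Proof. by []. Qed.

Lemma G_lin q a b a' b' : (q | a - a') -> (q | b - b') -> forall n, (q | G a b n - G a' b' n).
Proof.
move=> Ha Hb n.
suff : (q | G a b n - G a' b' n) /\ (q | G a b (S n) - G a' b' (S n)) by case.
elim: n => [|n [IH1 IH2]].
  rewrite !G0 !G1; split => //.
  have -> : b - a - (b' - a') = (b - b') - (a - a') by ring.
  exact: Z.divide_sub_r.
split => //. rewrite !G_rec.
have -> : G a b n + G a b (S n) - (G a' b' n + G a' b' (S n)) =
  (G a b n - G a' b' n) + (G a b (S n) - G a' b' (S n)) by ring.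
exact: Z.divide_add_r.
Qed.

Lemma ppow20 : ppow alp 20 = (4181, 6765).
Proof. by vm_compute. Qed.

Lemma G_per20 a b n k : (5 | G a b (n + 20 * k) - G a b n).
Proof.
elim: k => [|k IH]; first by rewrite muln0 addn0 Z.sub_diag; apply: Z.divide_0_r.
have -> : (n + 20 * k.+1 = 20 + (n + 20 * k))%N by rewrite mulnS; lia.
set N := (n + 20 * k)%N.
have E1 : G a b (20 + N) = 4181 * G a b N + 6765 * G a b (S N).
  have H := congr1 fst (st_shift a b 20 N); rewrite ppow20 in H; exact H.
rewrite E1.
have -> : 4181 * G a b N + 6765 * G a b (S N) - G a b n =
  5 * (836 * G a b N + 1353 * G a b (S N)) + (G a b N - G a b n) by ring.
apply: Z.divide_add_r => //. by apply: Z.divide_mul_l; apply: Z.divide_refl.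
Qed.

Definition nrm (a b : Z) := a * a + a * b - b * b.

Definition chk : bool :=
  all (fun a0 => all (fun b0 =>
    (nrm (Z.of_nat a0) (Z.of_nat b0) mod 5 =? 0) ||
    all (fun n0 => all (fun c => all (fun r =>
      has (fun j => (G (Z.of_nat a0) (Z.of_nat b0) (n0 + 4 * j * c) - Z.of_nat r) mod 5 =? 0)
        (iota 0 5)) (iota 0 5)) (iota 1 4)) (iota 0 20)) (iota 0 5)) (iota 0 5).

Lemma chk_ok : chk = true.
Proof. by vm_compute. Qed.

Lemma mod5 a b n0 P R : nrm a b mod 5 <> 0 -> (P %% 5 != 0)%N ->
  exists j, (5 | G a b (n0 + 4 * j * P) - R).
Proof.
move=> Hn HP.
have Ba := Z.mod_pos_bound a 5 ltac:(lia). have Bb := Z.mod_pos_bound b 5 ltac:(lia).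
have [a0 a0E] : exists a0 : nat, Z.of_nat a0 = a mod 5 by exists (Z.to_nat (a mod 5)); lia.
have [b0 b0E] : exists b0 : nat, Z.of_nat b0 = b mod 5 by exists (Z.to_nat (b mod 5)); lia.
have Da : (5 | a - Z.of_nat a0) by rewrite a0E; exists (a / 5); have := Z.div_mod a 5; lia.
have Db : (5 | b - Z.of_nat b0) by rewrite b0E; exists (b / 5); have := Z.div_mod b 5; lia.
have Hn0 : nrm (Z.of_nat a0) (Z.of_nat b0) mod 5 <> 0.
  case: Da => s Hs; case: Db => t Ht.
  have -> : nrm (Z.of_nat a0) (Z.of_nat b0) = nrm a b + (- (2 * Z.of_nat a0 * s + 5 * s * s + Z.of_nat a0 * t + Z.of_nat b0 * s + 5 * s * t - 2 * Z.of_nat b0 * t - 5 * t * t)) * 5.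
    rewrite /nrm.
    have -> : a = Z.of_nat a0 + s * 5 by lia.
    have -> : b = Z.of_nat b0 + t * 5 by lia.
    ring.
  by rewrite Z.mod_add.
have C := chk_ok.
have a0i : a0 \in iota 0 5 by rewrite mem_iota /=; apply/ltP; lia.
have b0i : b0 \in iota 0 5 by rewrite mem_iota /=; apply/ltP; lia.
move: C; rewrite /chk => /allP /(_ a0 a0i) /allP /(_ b0 b0i) /orP [/Z.eqb_eq H0|]; first by exfalso; exact: (Hn0 H0).
have n0i : (n0 %% 20)%N \in iota 0 20 by rewrite mem_iota /= ltn_mod.
have ci : (P %% 5)%N \in iota 1 4.
  rewrite mem_iota; have := ltn_mod P 5; move: HP; lia.
have Br := Z.mod_pos_bound R 5 ltac:(lia).
have [r rE] : exists r : nat, Z.of_nat r = R mod 5 by exists (Z.to_nat (R mod 5)); lia.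
have ri : r \in iota 0 5 by rewrite mem_iota /=; apply/ltP; lia.
move=> /allP /(_ _ n0i) /allP /(_ _ ci) /allP /(_ _ ri) /hasP [j _ /Z.eqb_eq Hj].
exists j.
have D1 := G_lin Da Db (n0 + 4 * j * P).
have Nidx : (n0 + 4 * j * P = (n0 %% 20 + 4 * j * (P %% 5)) + 20 * (n0 %/ 20 + j * (P %/ 5)))%N.
  rewrite {1}(divn_eq n0 20) {1}(divn_eq P 5). lia.
have D2 := G_per20 (Z.of_nat a0) (Z.of_nat b0) (n0 %% 20 + 4 * j * (P %% 5)) (n0 %/ 20 + j * (P %/ 5)).
rewrite -Nidx in D2.
have D3 : (5 | G (Z.of_nat a0) (Z.of_nat b0) (n0 %% 20 + 4 * j * (P %% 5)) - Z.of_nat r).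
  by apply/Z.mod_divide.
have D4 : (5 | Z.of_nat r - R) by rewrite rE; exists (- (R / 5)); have := Z.div_mod R 5; lia.
have -> : G a b (n0 + 4 * j * P) - R =
  (G a b (n0 + 4 * j * P) - G (Z.of_nat a0) (Z.of_nat b0) (n0 + 4 * j * P))
  + (G (Z.of_nat a0) (Z.of_nat b0) (n0 + 4 * j * P) - G (Z.of_nat a0) (Z.of_nat b0) (n0 %% 20 + 4 * j * (P %% 5)))
  + (G (Z.of_nat a0) (Z.of_nat b0) (n0 %% 20 + 4 * j * (P %% 5)) - Z.of_nat r)
  + (Z.of_nat r - R) by ring.
repeat apply: Z.divide_add_r => //.
Qed.

Definition padd (x y : Z * Z) : Z * Z := (fst x + fst y, snd x + snd y).
Fixpoint psum (f : nat -> Z * Z) (n : nat) : Z * Z :=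
  match n with O => (0, 0) | S k => padd (psum f k) (f k) end.

Lemma psum_tel h n : psum (fun i => psub (h (S i)) (h i)) n = psub (h n) (h 0%N).
Proof.
elim: n => [|n IH] /=; first by rewrite /psub; cbn [fst snd]; congr pair; ring.
rewrite IH /padd /psub; cbn [fst snd]; congr pair; ring.
Qed.

Lemma psum_scal g f n : psum (fun i => pscal g (f i)) n = pscal g (psum f n).
Proof.
elim: n => [|n IH] /=; first by rewrite /pscal; cbn [fst snd]; congr pair; ring.
rewrite IH /padd /pscal; cbn [fst snd]; congr pair; ring.
Qed.

Lemma psum_ext f f' n : (forall i, f i = f' i) -> psum f n = psum f' n.
Proof. move=> H; elim: n => [|n IH] //=; by rewrite IH H. Qed.

Lemma dvd_nat_Z (p n : nat) : (p %| n)%N -> (Z.of_nat p | Z.of_nat n).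
Proof. move/dvdnP => [k ->]; exists (Z.of_nat k); lia. Qed.

Lemma reduce a b m P : 1 <= m -> ~ per a b m P -> per a b m (5 * P) ->
  exists (p : nat) (w : Z * Z), prime p /\ (Z.of_nat p | m) /\
    ~ ((Z.of_nat p | fst w) /\ (Z.of_nat p | snd w)) /\
    (Z.of_nat p | fst (psum (fun i => pmul (ppow alp (i * P)) w) 5)) /\
    (Z.of_nat p | snd (psum (fun i => pmul (ppow alp (i * P)) w) 5)).
Proof.
move=> m1 nP P5.
set w := psub (st a b P) (st a b 0).
set g := Z.gcd (Z.gcd (fst w) (snd w)) m.
have g0 : 0 < g.
  have := Z.gcd_nonneg (Z.gcd (fst w) (snd w)) m.
  have : g <> 0 by move=> /Z.gcd_eq_0 [_]; lia.
  rewrite /g; lia.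
have gw1 : (g | fst w) by apply: Z.divide_trans (Z.gcd_divide_l _ _) (Z.gcd_divide_l _ _).
have gw2 : (g | snd w) by apply: Z.divide_trans (Z.gcd_divide_l _ _) (Z.gcd_divide_r _ _).
have gm : (g | m) by apply: Z.gcd_divide_r.
case: gw1 => w1 Hw1; case: gw2 => w2 Hw2; case: gm => m' Hm.
have m'1 : 1 < m'.
  have : 0 < m' by nia.
  move=> H; suff : m' <> 1 by lia.
  move=> E; apply: nP; rewrite /per /congP; split.
    by exists w1; move: Hw1; rewrite /w /psub Hm E; cbn [fst snd]; lia.
  by exists w2; move: Hw2; rewrite /w /psub Hm E; cbn [fst snd]; lia.
set n := Z.to_nat m'.
have n1 : (1 < n)%N by apply/ltP; rewrite /n; lia.
set p := pdiv n.
have pp : prime p := pdiv_prime n1.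
have pm' : (Z.of_nat p | m').
  have := dvd_nat_Z (pdiv_dvd n); rewrite /n Z2Nat.id //; lia.
have p1 : (1 < p)%N := prime_gt1 pp.
exists p, (w1, w2); split => //; split.
  by rewrite Hm; apply: Z.divide_mul_l.
split.
  case=> /= [[k1 H1] [k2 H2]].
  have : (Z.of_nat p * g | g).
    suff : (Z.of_nat p * g | Z.gcd (Z.gcd (fst w) (snd w)) m) by [].
    apply: Z.gcd_greatest; last first.
      by case: pm' => k Hk; exists k; rewrite Hm Hk; ring.
    apply: Z.gcd_greatest.
      by exists k1; rewrite Hw1 H1; ring.
    by exists k2; rewrite Hw2 H2; ring.
  move=> /Z.divide_pos_le H; have : Z.of_nat p * g <= g by apply: H.
  move: p1 => /ltP; nia.
have wE : w = pscal g (w1, w2).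
  by rewrite /pscal (surjective_pairing w) Hw1 Hw2; cbn [fst snd]; congr pair; ring.
have SE : psub (st a b (5 * P)) (st a b 0) = pscal g (psum (fun i => pmul (ppow alp (i * P)) (w1, w2)) 5).
  rewrite -psum_scal.
  have := psum_tel (fun i => st a b (i * P)) 5.
  rewrite mul0n => <-.
  apply: psum_ext => i.
  rewrite -pmulS -wE /w pmulB -!st_shift mulSn addnC addn0. by [].
case: P5 => [[k1 H1] [k2 H2]].
have : (m' | fst (psum (fun i => pmul (ppow alp (i * P)) (w1, w2)) 5)) /\
       (m' | snd (psum (fun i => pmul (ppow alp (i * P)) (w1, w2)) 5)).
  move: (congr1 fst SE) (congr1 snd SE); rewrite /psub /pscal; cbn [fst snd].
  rewrite H1 H2 Hm => E1 E2.
  split.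
    exists k1; apply: (Z.mul_reg_l _ _ g); first lia. rewrite -E1; ring.
  exists k2; apply: (Z.mul_reg_l _ _ g); first lia. rewrite -E2; ring.
case=> D1 D2; split; exact: Z.divide_trans pm' _.
Qed.

Lemma nonc a b (p : nat) : prime p ->
  (forall n, (Z.of_nat p | G a b (n + p.-1) - G a b n)) ->
  complete_mod (G a b) (Z.of_nat p) -> False.
Proof.
move=> pp Hper Hc.
have p1 : (1 < p)%N := prime_gt1 pp.
have red : forall n, (1 <= n)%N -> exists k, (k < p.-1)%N /\ (Z.of_nat p | G a b k.+1 - G a b n).
  elim/ltn_ind => n IH n1.
  case: (leqP n p.-1) => hn.
    exists n.-1; split; first by move: n1 hn; lia.
    rewrite prednK //; exists 0; ring.
  have [k [hk Hk]] := IH (n - p.-1)%N ltac:(move: p1 hn; lia) ltac:(move: p1 hn; lia).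
  exists k; split => //.
  have := Hper (n - p.-1)%N; rewrite subnK; last by move: hn; lia.
  move=> H.
  have -> : G a b k.+1 - G a b n = (G a b k.+1 - G a b (n - p.-1)) - (G a b n - G a b (n - p.-1)) by ring.
  exact: Z.divide_sub_r.
have ex : forall r : 'I_p, exists k, (k < p.-1)%N && (((G a b k.+1 - Z.of_nat r) mod Z.of_nat p) =? 0).
  move=> r.
  have [n [n1 Hn]] := Hc (Z.of_nat r).
  have [k [hk Hk]] := red n (introT leP n1).
  exists k; rewrite hk /=; apply/Z.eqb_eq/Z.mod_divide; first lia.
  have -> : G a b k.+1 - Z.of_nat r = (G a b k.+1 - G a b n) + (G a b n - Z.of_nat r) by ring.
  apply: Z.divide_add_r => //; apply/Z.mod_divide => //; lia.
pose f (r : 'I_p) : 'I_p.-1 := Ordinal (proj1 (andP (xchooseP (ex r)))).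
have finj : injective f.
  move=> r1 r2 /(congr1 val) /= E.
  have H1 := proj2 (andP (xchooseP (ex r1))).
  have H2 := proj2 (andP (xchooseP (ex r2))).
  rewrite E in H1.
  move/Z.eqb_eq/Z.mod_divide: H1 => H1. move/Z.eqb_eq/Z.mod_divide: H2 => H2.
  have : (Z.of_nat p | Z.of_nat r2 - Z.of_nat r1).
    have -> : Z.of_nat r2 - Z.of_nat r1 = (G a b (xchoose (ex r2)).+1 - Z.of_nat r1) - (G a b (xchoose (ex r2)).+1 - Z.of_nat r2) by ring.
    apply: Z.divide_sub_r; [apply: H1|apply: H2]; lia.
  case=> q Hq; apply: val_inj => /=.
  have := ltn_ord r1; have := ltn_ord r2; move=> h2 h1.
  have : q = 0 by nia.
  move=> q0; rewrite q0 in Hq; lia.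
have := leq_card f finj; rewrite !card_ord; move: p1; lia.
Qed.

Lemma div5m m x : ~ (5 | m) -> (5 | x) -> (m | x) -> (5 * m | x).
Proof.
move=> n5 H5 [k Hk].
have rp : rel_prime 5 m.
  apply/Zgcd_1_rel_prime.
  set d := Z.gcd 5 m.
  have d0 := Z.gcd_nonneg 5 m.
  have [k5 Hk5] : (d | 5) by apply: Z.gcd_divide_l.
  have dm : (d | m) by apply: Z.gcd_divide_r.
  have d5 : d <= 5 by apply: Z.divide_pos_le; [lia | exists k5].
  have : d <> 0 by move=> E; rewrite E in Hk5; lia.
  move=> dn0.
  have : d = 1 \/ d = 2 \/ d = 3 \/ d = 4 \/ d = 5 by lia.
  case=> [//|[E|[E|[E|E]]]]; rewrite E in Hk5 dm; try lia.
  by exfalso; apply: n5.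
have : (5 | k) by apply: (Gauss 5 m k) => //; rewrite Z.mul_comm -Hk.
case=> q Hq; exists q; rewrite Hk Hq; ring.
Qed.

Lemma complete_div a b m p : (p | m) -> complete_mod (G a b) m -> complete_mod (G a b) p.
Proof.
move=> pm Hc r.
have [n [n1 Hn]] := Hc r.
exists n; split => //.
case: (Z.eq_dec p 0) => [p0|p0].
  move: pm; rewrite p0 => -[k Hk].
  have m0 : m = 0 by lia.
  by rewrite m0 Zmod_0_r in Hn; rewrite Zmod_0_r.
apply/Z.mod_divide => //.
case: (Z.eq_dec m 0) => [m0|m0].
  rewrite m0 Zmod_0_r in Hn; rewrite Hn; apply: Z.divide_0_r.
apply: Z.divide_trans pm _; apply/Z.mod_divide => //.
Qed.

From mathcomp Require Import ring.
Import GRing.Theory.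

Section Prime.
Local Open Scope ring_scope.
Variable K : fieldType.
Variable p : nat.
Hypothesis chK : p \in [pchar K].
Hypothesis p5 : (5%:R : K) != 0.
Variable al : K.
Hypothesis Ha : al ^+ 2 = al + 1.
Local Notation Fr := (pFrobenius_aut chK).

Lemma al_ne : al != 1 - al.
Proof.
apply/negP => /eqP E.
have : (2 * al - 1) ^+ 2 = 5%:R :> K.
  have -> : (2 * al - 1) ^+ 2 = 4%:R * al ^+ 2 - 4%:R * al + 1 by ring.
  rewrite Ha; ring.
have -> : 2 * al - 1 = al - (1 - al) by ring.
rewrite -E subrr.
by rewrite expr0n /= => /esym/eqP; rewrite (negbTE p5).
Qed.

Lemma root_cases (s : K) : s ^+ 2 = s + 1 -> s = al \/ s = 1 - al.
Proof.
move=> Hs.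
have : (s - al) * (s - (1 - al)) = 0.
  have -> : (s - al) * (s - (1 - al)) = s ^+ 2 - s + (al - al ^+ 2) by ring.
  rewrite Hs Ha; ring.
move/eqP; rewrite mulf_eq0 => /orP[] /eqP H.
  by left; apply/eqP; rewrite -subr_eq0 H.
by right; apply/eqP; rewrite -subr_eq0 H.
Qed.

Lemma Fr_al : Fr al = al \/ Fr al = 1 - al.
Proof.
apply: root_cases.
by rewrite -rmorphXn Ha rmorphD rmorph1.
Qed.


Lemma alb : al * (1 - al) = -1.
Proof. have -> : al * (1 - al) = al - al ^+ 2 by ring. rewrite Ha; ring. Qed.

Lemma al_neq0 : al != 0.
Proof. apply/eqP => E; move: alb; rewrite E mul0r => /eqP; rewrite eq_sym oppr_eq0 oner_eq0. by []. Qed.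

Lemma pow_mod5 (y : K) k : y ^+ 5 = 1 -> y ^+ k = y ^+ (k %% 5)%N.
Proof.
move=> y5; rewrite {1}(divn_eq k 5) exprD mulnC exprM y5 expr1n mul1r. by [].
Qed.

Lemma ord5 (y : K) c : y ^+ 5 = 1 -> (c %% 5 != 0)%N -> y ^+ c = 1 -> y = 1.
Proof.
move=> y5 c0 yc.
have yd : y ^+ (c %% 5)%N = 1 by rewrite -pow_mod5.
have : (c %% 5 < 5)%N by rewrite ltn_mod.
move: yd c0; set d := (c %% 5)%N.
case: d => [|[|[|[|[|d]]]]] //= yd _ _.
- have -> : y = y ^+ 6 by rewrite (pow_mod5 6 y5) expr1.
  by rewrite -[6%N]/(2 * 3)%N exprM yd expr1n.
- have -> : y = y ^+ 6 by rewrite (pow_mod5 6 y5) expr1.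
  by rewrite -[6%N]/(3 * 2)%N exprM yd expr1n.
- have -> : y = y ^+ 16 by rewrite (pow_mod5 16 y5) expr1.
  by rewrite -[16%N]/(4 * 4)%N exprM yd expr1n.
Qed.

Lemma caseB (T : nat) (u : K) : Fr al = 1 - al -> u != 0 ->
  (1 + al ^+ T + (al ^+ T) ^+ 2 + (al ^+ T) ^+ 3 + (al ^+ T) ^+ 4) * u = 0 -> False.
Proof.
move=> Fa u0 HS.
set y := al ^+ T in HS.
have S0 : 1 + y + y ^+ 2 + y ^+ 3 + y ^+ 4 = 0.
  by move/eqP: HS; rewrite mulf_eq0 (negbTE u0) orbF => /eqP.
have y5 : y ^+ 5 = 1.
  apply/eqP; rewrite -subr_eq0; apply/eqP.
  have -> : y ^+ 5 - 1 = (y - 1) * (1 + y + y ^+ 2 + y ^+ 3 + y ^+ 4) by ring.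
  by rewrite S0 mulr0.
have Fy : Fr y = (1 - al) ^+ T by rewrite /y rmorphXn; congr (_ ^+ _).
have yFy : y * Fr y = (-1) ^+ T by rewrite Fy /y -exprMn alb.
have yp : y ^+ p.+1 = (-1) ^+ T by rewrite exprS -yFy pFrobenius_autE.
have y2p : y ^+ (2 * p.+1) = 1.
  by rewrite mulnC exprM yp -exprM mulnC exprM sqrrN expr1n expr1n.
have Sy1 : y != 1.
  apply/negP => /eqP E; move: S0; rewrite E !expr1n.
  have -> : 1 + 1 + 1 + 1 + 1 = 5%:R :> K by ring.
  by move/eqP; rewrite (negbTE p5).
case c0 : ((2 * p.+1) %% 5 == 0)%N; last first.
  by apply/(negP Sy1)/eqP; apply: (ord5 y5 _ y2p); rewrite c0.
have d5 : (5 %| p.+1)%N.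
  have : (5 %| 2 * p.+1)%N by rewrite /dvdn; exact: c0.
  by rewrite Gauss_dvdr.
have y1 : y ^+ p.+1 = 1 by rewrite (pow_mod5 _ y5) (eqP d5) expr0.
set z := y ^+ p.
have yz : y * z = 1 by rewrite /z -exprS.
have Fyz : Fr y = z by rewrite pFrobenius_autE.
have Fz : Fr z = y.
  have zFz : z * Fr z = 1 by rewrite -{1}Fyz -rmorphM yz rmorph1.
  by rewrite -(mul1r (Fr z)) -yz -mulrA zFz mulr1.
set t := y + z.
have Ft : Fr t = t by rewrite /t (pFrobenius_autD_comm _ (mulrC _ _)) Fyz Fz addrC.
have y0 : y != 0 by apply/eqP => E; move: yz; rewrite E mul0r => /eqP; rewrite eq_sym oner_eq0.
have t2 : t ^+ 2 + t - 1 = 0.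
  have E : y ^+ 2 * (t ^+ 2 + t - 1) = (1 + y + y ^+ 2 + y ^+ 3 + y ^+ 4)
      + (y * z - 1) * (2%:R * y ^+ 2 + y * z + 1 + y) by rewrite /t; ring.
  move: E; rewrite S0 yz subrr mul0r addr0 => /eqP.
  by rewrite mulf_eq0 expf_eq0 (negbTE y0) andbF orFb => /eqP.
have s2 : (- t) ^+ 2 = - t + 1.
  apply/eqP; rewrite -subr_eq0; apply/eqP.
  have -> : (- t) ^+ 2 - (- t + 1) = t ^+ 2 + t - 1 by ring.
  exact: t2.
have Fs : Fr (- t) = - t by rewrite pFrobenius_autN Ft.
have ne := al_ne.
case: (root_cases s2) => E; rewrite E in Fs.
  by move: ne; rewrite -{1}Fs Fa eqxx.
move: ne; rewrite (pFrobenius_autD_comm _ (mulrC _ _)) pFrobenius_aut1 pFrobenius_autN Fa in Fs.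
by move: Fs; rewrite opprB addrC subrK => Fs; rewrite {1}Fs eqxx.
Qed.


Lemma p_gt0 : (0 < p)%N.
Proof. by apply: prime_gt0; apply: (pcharf_prime chK). Qed.

Lemma caseA (g : nat -> K) : Fr al = al -> (forall n, g n.+2 = g n + g n.+1) ->
  forall n, g (n + p.-1)%N = g n.
Proof.
move=> Fa Hg n.
set be := 1 - al.
have Fb : Fr be = be by rewrite /be (pFrobenius_autD_comm _ (mulrC _ _)) pFrobenius_aut1 pFrobenius_autN Fa.
have pE : p = (p.-1).+1 by rewrite prednK // p_gt0.
have bal : be * al = -1 by rewrite mulrC alb.
have pw1 (x : K) : x != 0 -> Fr x = x -> x ^+ p.-1 = 1.
  move=> x0 Fx; apply: (mulfI x0); rewrite mulr1 -exprS -pE -(pFrobenius_autE chK); exact: Fx.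
have be0 : be != 0 by apply/eqP => E; move: bal; rewrite E mul0r => /eqP; rewrite eq_sym oppr_eq0 oner_eq0.
have ap := pw1 _ al_neq0 Fa.
have bp := pw1 _ be0 Fb.
have eE k : g k.+1 - be * g k = al ^+ k * (g 1%N - be * g 0%N).
  elim: k => [|k IH]; first by rewrite expr0 mul1r.
  rewrite exprS -mulrA -IH Hg.
  have -> : al * (g k.+1 - be * g k) = al * g k.+1 - (be * al) * g k by ring.
  rewrite bal /be; ring.
have fE k : g k.+1 - al * g k = be ^+ k * (g 1%N - al * g 0%N).
  elim: k => [|k IH]; first by rewrite expr0 mul1r.
  rewrite exprS -mulrA -IH Hg.
  have -> : be * (g k.+1 - al * g k) = be * g k.+1 - (be * al) * g k by ring.
  rewrite bal /be; ring.
have dE k : (al - be) * g k = al ^+ k * (g 1%N - be * g 0%N) - be ^+ k * (g 1%N - al * g 0%N).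
  by rewrite -eE -fE; ring.
have ab0 : al - be != 0 by rewrite subr_eq0 al_ne.
apply: (mulfI ab0).
by rewrite !dE !exprD ap bp !mulr1.
Qed.

End Prime.

Section Phi.
Variable K : fieldType.
Variable p : nat.
Hypothesis chK : p \in [pchar K]%R.
Definition phi (z : Z) : K := ((int_of_Z z)%:~R)%R.

Lemma phiD x y : phi (x + y) = (phi x + phi y)%R.
Proof. by rewrite /phi (rmorphD int_of_Z) intrD. Qed.
Lemma phiM x y : phi (x * y) = (phi x * phi y)%R.
Proof. by rewrite /phi (rmorphM int_of_Z) intrM. Qed.
Lemma phiN x : phi (- x) = (- phi x)%R.
Proof. by rewrite /phi (rmorphN int_of_Z) mulrNz. Qed.
Lemma phiB x y : phi (x - y) = (phi x - phi y)%R.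
Proof. by rewrite -phiN -phiD. Qed.
Lemma phi1 : phi 1 = 1%R.
Proof. by []. Qed.
Lemma phi0 : phi 0 = 0%R.
Proof. by []. Qed.
Lemma phi_nat (n : nat) : phi (Z.of_nat n) = (n%:R)%R.
Proof. rewrite /phi. have -> : int_of_Z (Z.of_nat n) = Posz n by rewrite -(Z_of_intK (Posz n)). by []. Qed.
Lemma Fr_phi z : pFrobenius_aut chK (phi z) = phi z.
Proof. by rewrite /phi rmorph_int. Qed.

Lemma phi_eq0 z : phi z = 0%R <-> (Z.of_nat p | z).
Proof.
have pp := pcharf_prime chK.
have p0 : (0 < Z.of_nat p) by have := prime_gt0 pp; lia.
rewrite (Z.div_mod z (Z.of_nat p)); last lia.
have Hr := Z.mod_pos_bound z (Z.of_nat p) p0.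
set q := (z / Z.of_nat p); set r := (z mod Z.of_nat p).
have -> : r = Z.of_nat (Z.to_nat r) by lia.
rewrite phiD phiM !phi_nat (GRing.pcharf0 chK) mul0r add0r.
split.
  move/eqP; rewrite -(dvdn_pcharf chK) => /dvdnP [k Hk].
  have Hk' : (Z.to_nat r = k * p)%nat by exact Hk.
  have : k = 0%N by nia.
  move=> k0; rewrite k0 in Hk'; rewrite Hk' /=.
  by exists q; lia.
move=> Hd.
have : (Z.of_nat p | Z.of_nat (Z.to_nat r)).
  by apply: (Z.divide_add_cancel_r _ (Z.of_nat p * q)) => //; apply: Z.divide_mul_l; apply: Z.divide_refl.
move=> [k Hk].
have : k = 0 by nia.
move=> k0; rewrite k0 /= in Hk.
have -> : Z.to_nat r = 0%N by lia.
by [].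
Qed.
End Phi.

Section Psi.
Variable K : fieldType.
Variable al : K.
Hypothesis Ha : (al ^+ 2 = al + 1)%R.
Definition psi (x : Z * Z) : K := (phi K (fst x) + phi K (snd x) * al)%R.

Lemma psi_mul x y : psi (pmul x y) = (psi x * psi y)%R.
Proof.
rewrite /psi /pmul; cbn [fst snd].
rewrite !(phiD, phiM).
have E : forall u v w z : K, ((u + v * al) * (w + z * al) = u * w + v * z + (u * z + v * w + v * z) * al)%R.
  move=> u v w z.
  have -> : ((u + v * al) * (w + z * al) = u * w + (u * z + v * w) * al + v * z * al ^+ 2)%R by ring.
  rewrite Ha; ring.
by rewrite E.
Qed.

Lemma psi_ppow x n : psi (ppow x n) = (psi x ^+ n)%R.
Proof.
elim: n => [|n IH] /=.
  by rewrite /psi /= phi1 phi0 mul0r addr0.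
by rewrite psi_mul IH exprS.
Qed.

Lemma psi_alp : psi alp = al.
Proof. by rewrite /psi /= phi0 phi1 mul1r add0r. Qed.

Lemma psi_padd x y : psi (padd x y) = (psi x + psi y)%R.
Proof. rewrite /psi /padd; cbn [fst snd]; rewrite !phiD; ring. Qed.
End Psi.

Lemma root_exists (K : closedFieldType) : exists al : K, (al ^+ 2 = al + 1)%R.
Proof.
have [x Hx] := @solve_monicpoly K 2%N (fun _ => 1%R) isT.
by exists x; rewrite Hx big_ord_recr big_ord1 /= !mul1r expr0 expr1 addrC.
Qed.

Lemma prime_contra a b (p : nat) (w : Z * Z) P : prime p -> p <> 5%N ->
  complete_mod (G a b) (Z.of_nat p) ->
  ~ ((Z.of_nat p | fst w) /\ (Z.of_nat p | snd w)) ->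
  (Z.of_nat p | fst (psum (fun i => pmul (ppow alp (i * P)) w) 5)) ->
  (Z.of_nat p | snd (psum (fun i => pmul (ppow alp (i * P)) w) 5)) -> False.
Proof.
move=> pp p5 Hc Hw H1 H2.
have [K [FtoK _]] := countable_algebraic_closure ('F_p).
have chK : p \in [pchar K]%R := rmorph_pchar FtoK (pchar_Fp pp).
have [al Ha] := root_exists K.
have k5 : ((5%N)%:R != 0 :> K)%R.
  rewrite -(dvdn_pcharf chK) (@dvdn_prime2 p 5 pp isT).
  by apply/eqP.
have phiG n : phi K (G a b n.+2) = (phi K (G a b n) + phi K (G a b n.+1))%R by rewrite G_rec phiD.
case: (@Fr_al K p chK al Ha) => Fa.
  have Hg := @caseA K p chK k5 al Ha (fun n => phi K (G a b n)) Fa phiG.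
  apply: (nonc pp _ Hc) => n.
  apply/(phi_eq0 chK); rewrite phiB Hg subrr; by [].
set u := psi al w.
have u0 : (u != 0)%R.
  apply/eqP => U.
  have U' : (phi K (fst w) + phi K (snd w) * pFrobenius_aut chK al = 0)%R.
    have := congr1 (pFrobenius_aut chK) U.
    rewrite /u /psi (pFrobenius_autD_comm _ (mulrC _ _)) (pFrobenius_autM_comm _ (mulrC _ _)) !Fr_phi.
    by rewrite pFrobenius_aut0.
  have W2 : (phi K (snd w) * (al - pFrobenius_aut chK al) = 0)%R.
    have -> : (phi K (snd w) * (al - pFrobenius_aut chK al) = (phi K (fst w) + phi K (snd w) * al) - (phi K (fst w) + phi K (snd w) * pFrobenius_aut chK al))%R by ring.
    by move: U; rewrite /u /psi => ->; rewrite U' subrr.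
  have ne : (al - pFrobenius_aut chK al != 0)%R by rewrite Fa subr_eq0 (al_ne k5 Ha).
  move/eqP: W2; rewrite mulf_eq0 (negbTE ne) orbF => /eqP W2.
  have W1 : phi K (fst w) = 0%R by move: U; rewrite /u /psi W2 mul0r addr0.
  by apply: Hw; split; apply/(phi_eq0 chK).
apply: (@caseB K p chK k5 al Ha P u Fa u0).
have S0 : psi al (psum (fun i => pmul (ppow alp (i * P)) w) 5) = 0%R.
  by rewrite /psi (proj2 (phi_eq0 chK _) H1) (proj2 (phi_eq0 chK _) H2) mul0r addr0.
move: S0; rewrite /= !(psi_padd, psi_mul Ha, psi_ppow Ha) psi_alp.
rewrite /psi /= phi0 mul0r addr0 -/u.
rewrite !(mulnC _ P) !exprM => <-.
rewrite phi1 /u /psi; ring.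
Qed.

Lemma descent a b m : 1 <= m -> ~ (5 | m) -> complete_mod (G a b) m ->
  forall Q, (0 < Q)%N -> per a b m Q -> exists P, (0 < P)%N /\ (P %% 5 != 0)%N /\ per a b m P.
Proof.
move=> m1 n5 Hc.
elim/ltn_ind => Q IH Q0 HQ.
case: (boolP (Q %% 5 == 0)%N) => [/eqP Q5|Q5]; last by exists Q.
set P' := (Q %/ 5)%N.
have QE : Q = (5 * P')%N by rewrite /P' {1}(divn_eq Q 5) Q5 addn0 mulnC.
have P0 : (0 < P')%N by move: Q0; rewrite QE; lia.
case: (classic (per a b m P')) => HP.
  apply: (IH P') => //; rewrite QE; lia.
rewrite QE in HQ.
have [p [w [pp [pm [Hw [H1 H2]]]]]] := reduce m1 HP HQ.
apply: False_ind; apply: (prime_contra (a := a) (b := b) (P := P') pp _ _ Hw H1 H2).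
  by move=> E; apply: n5; move: pm; rewrite E.
exact: complete_div pm Hc.
Qed.

Theorem mainTheorem17 (a b m : Z) :
  Z.gcd a b = 1 ->
  (a * a + a * b - b * b) mod 5 <> 0 ->
  1 <= m ->
  m mod 5 <> 0 ->
  complete_mod (G a b) m ->
  complete_mod (G a b) (5 * m).
Proof.
move=> _ Hn m1 m5 Hc.
have n5 : ~ (5 | m) by move=> /Z.mod_divide H; apply: m5; apply: H.
have [Q [Q0 HQ]] := per_exists a b m1.
have [P [P0 [P5 HP]]] := descent m1 n5 Hc Q0 HQ.
move=> R.
have [n0 [n01 Hn0]] := Hc R.
have [j Hj] := mod5 n0 R Hn P5.
exists (n0 + 4 * j * P)%N; split; first lia.
apply/Z.mod_divide; first lia.
apply: div5m => //.
have [C _] := per_iter HP (4 * j) n0.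
rewrite /st in C; cbn [fst snd] in C.
have -> : G a b (n0 + 4 * j * P) - R = (G a b (n0 + 4 * j * P) - G a b n0) + (G a b n0 - R) by lia.
apply: Z.divide_add_r => //.
by apply/Z.mod_divide => //; lia.
Qed.
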